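(* Let $p$ be a prime and $F$ a field of characteristic $p$. Let $L\in F[x]$ be a $p$-polynomial of $p$-degree $n$ with no repeated roots, let $E$ be a splitting field of $L$ over $F$, and let $V_L\subseteq E$ be the $\mathbb{F}_p$-space of roots of $L$. Let $P(x)\in F[x]$ be the polynomial with $L(x)/x=P(x^{p-1})$, and let $L_P\in F[x]$ be a $p$-linearized polynomial of smallest degree that is divisible by $P$. Let $\alpha_1,\dots,\alpha_n$ be an $\mathbb{F}_p$-basis of $V_L$. Then every element $\alpha_1^{k_1}\alpha_2^{k_2}\cdots\alpha_n^{k_n}$, where $k_1,\dots,k_n$ are nonnegative integers with $k_1+\cdots+k_n=p-1$, is a root of $L_P$.
   Context: A $p$-polynomial (p-linearized polynomial) of $p$-degree $n$ is $\sum_{i=0}^n a_ix^{p^i}$ with $a_n\neq0$. Since each $p^i-1$ is divisible by $p-1$, $L(x)/x$ is a polynomial in $x^{p-1}$, so $P$ is well defined. *)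

(* Defs.v *)
From HB Require Import structures.
From mathcomp Require Import all_boot all_order all_algebra all_field.
Set Implicit Arguments. Unset Strict Implicit. Unset Printing Implicit Defensive.
Import GRing.Theory.
Local Open Scope ring_scope.

Definition is_plinearized (R : nzRingType) (p : nat) (q : {poly R}) : Prop :=
  forall i : nat, q`_i != 0 -> exists k : nat, i = (p ^ k)%N.

Definition is_ppoly (R : nzRingType) (p n : nat) (q : {poly R}) : Prop :=
  is_plinearized p q /\ size q = (p ^ n).+1.

(* LP is a p-linearized polynomial of smallest degree that is divisible by P
   (nonzero, since otherwise "smallest degree" is meaningless). *)
Definition is_min_plin_multiple (F : fieldType) (p : nat) (P LP : {poly F}) : Prop :=
  [/\ is_plinearized p LP, LP != 0, P %| LP &
      forall q : {poly F}, is_plinearized p q -> q != 0 -> P %| q ->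
        (size LP <= size q)%N].

(* Main.v *)
Require Import Defs.
From HB Require Import structures.
From mathcomp Require Import all_boot all_order all_algebra all_field zify ring.
Import GRing.Theory.
Local Open Scope ring_scope.
Lemma addf0 (E : zmodType) (f : E -> E) : (forall x y, f (x + y) = f x + f y) -> f 0 = 0.
Proof.
move=> fA; have h := fA 0 0; rewrite addr0 in h.
by apply: (@addrI _ (f 0)); rewrite addr0 -h.
Qed.

Lemma fMn (E : zmodType) (f : E -> E) : (forall x y, f (x + y) = f x + f y) ->
  forall x N, f (x *+ N) = f x *+ N.
Proof.
move=> fA x; elim=> [|N IH]; first by rewrite !mulr0n addf0.
by rewrite !mulrS fA IH.
Qed.

Lemma fsum (E : zmodType) (f : E -> E) : (forall x y, f (x + y) = f x + f y) ->
  forall (I : Type) (r : seq I) (P : pred I) (F : I -> E),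
  f (\sum_(i <- r | P i) F i) = \sum_(i <- r | P i) f (F i).
Proof. by move=> fA; apply: big_morph => //; apply: addf0. Qed.

Lemma extract (E : fieldType) (p : nat) (f : E -> E) (m : nat) (a : nat -> E) :
  p \in [pchar E] -> (forall x y, f (x + y) = f x + f y) -> (m < p)%N ->
  (forall t, (t < p)%N -> f (\sum_(j < m.+1) a j * t%:R ^+ j) = 0) ->
  forall j, (j <= m)%N -> f (a j) = 0.
Proof.
move=> hp fA hm ht j hj.
have _ := 0.
pose H := \poly_(j < m.+1) f (a j).
have HE : H = 0 :> {poly E}.
  apply/eqP; apply: contraT => nz.
  have hall : all (root H) [seq (t%:R : E) | t <- iota 0 p].
    apply/allP => xx /mapP [t]; rewrite mem_iota add0n => /andP[_ ht'] ->.
    rewrite /root /H horner_poly; apply/eqP; rewrite -[RHS](ht _ ht') (@fsum _ f fA).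
    apply: eq_bigr => i _; rewrite -natrX (mulr_natr (f (a i))) (mulr_natr (a i)) fMn //.
  have huniq : uniq [seq (t%:R : E) | t <- iota 0 p].
    rewrite map_inj_in_uniq ?iota_uniq //.
    have key : forall u v, (u < p)%N -> (v < p)%N -> (u <= v)%N -> u%:R = v%:R :> E -> u = v.
      move=> u v hu hv huv e; apply/eqP; rewrite eqn_leq huv /=.
      have : (p %| v - u)%N by rewrite (dvdn_pcharf hp) natrB // e subrr.
      move=> /dvdnP [q hq]; case: q hq => [|q] hq; nia.
    move=> u v; rewrite !mem_iota !add0n /= => hu hv e.
    have [huv|hvu] := leqP u v; first exact: key.
    by apply/esym/key => //; apply: ltnW.
  have := max_poly_roots nz hall huniq.
  rewrite size_map size_iota; have := size_poly m.+1 (fun j => f (a j)).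
  by rewrite -/H => h1 h2; have := leq_trans h2 h1; rewrite ltnS leqNgt hm.
have := congr1 (fun q : {poly E} => q`_j) HE.
by rewrite /H coef_poly ltnS hj coef0.
Qed.

Lemma ndvd_fact (p m : nat) : prime p -> (m < p)%N -> ~~ (p %| m`!)%N.
Proof.
move=> pp; elim: m => [|m IH] hm; first by rewrite fact0 dvdn1; apply/eqP=> e; move: pp; rewrite e.
rewrite factS Euclid_dvdM // negb_or IH ?andbT; last exact: ltnW.
by apply/negP => /(dvdn_leq (ltn0Sn m)); rewrite leqNgt hm.
Qed.

Lemma ndvd_bin (p m j : nat) : prime p -> (m < p)%N -> (j <= m)%N -> ~~ (p %| 'C(m, j))%N.
Proof.
move=> pp hm hj; apply/negP => h; move/negP: (ndvd_fact p m pp hm); apply.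
by rewrite -(bin_fact hj) dvdn_mulr.
Qed.

Lemma claim (E : fieldType) (p : nat) (f : E -> E) :
  prime p -> p \in [pchar E] -> (forall x y, f (x + y) = f x + f y) ->
  forall n (b : 'I_n -> E) (g : E) (m : nat), (m < p)%N ->
  (forall c : 'I_n -> nat, f (g * (\sum_i (c i)%:R * b i) ^+ m) = 0) ->
  forall k : 'I_n -> nat, (\sum_i k i)%N = m -> f (g * \prod_i b i ^+ k i) = 0.
Proof.
move=> pp hp fA; elim=> [|n IH] b g m hm hc k hk.
  move: hk; rewrite big_ord0 => hm0; subst m.
  by have := hc (fun _ => 0%N); rewrite !big_ord0 expr0.
rewrite big_ord_recl mulrA.
move: hk; rewrite big_ord_recl => hk.
have hj : (k ord0 <= m)%N by rewrite -hk leq_addr.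
apply: (IH (fun i => b (lift ord0 i)) _ (m - k ord0)%N); last by rewrite -hk addKn.
  by apply: leq_ltn_trans hm; apply: leq_subr.
move=> c'.
set r := \sum_i (c' i)%:R * b (lift ord0 i).
pose a := fun j => g * (b ord0 ^+ j * r ^+ (m - j)) *+ 'C(m, j).
have hcn : ('C(m, k ord0)%:R : E) != 0.
  by rewrite -(dvdn_pcharf hp); apply: ndvd_bin.
suff : f (a (k ord0)) = 0.
  rewrite /a fMn // -mulr_natr => /eqP.
  by rewrite mulf_eq0 (negbTE hcn) orbF mulrA => /eqP.
apply: (@extract E p f m a hp fA hm) hj => t ht.
have := hc (fun i => if unlift ord0 i is Some i' then c' i' else t).
rewrite big_ord_recl unlift_none.
under eq_bigr => i _ do rewrite liftK.
rewrite -/r addrC exprDn mulr_sumr => h; rewrite -[RHS]h.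
congr f; apply: eq_bigr => i _; rewrite /a exprMn.
rewrite mulrnAl mulrnAr; congr (_ *+ _); ring.
Qed.

Lemma plin_map (F : fieldType) (E : fieldExtType F) (p : nat) (q : {poly F}) :
  is_plinearized p q -> is_plinearized p (map_poly (in_alg E) q).
Proof.
move=> hq i; rewrite coef_map /= => nz; apply: hq.
by apply: contraNneq nz => ->; rewrite /= ?scale0r ?rmorph0.
Qed.

Lemma expDpk (R : comNzRingType) (p : nat) (x y : R) (k : nat) :
  p \in [pchar R] -> (x + y) ^+ (p ^ k) = x ^+ (p ^ k) + y ^+ (p ^ k).
Proof.
move=> hp; elim: k => [|k IH]; first by rewrite expn0 !expr1.
by rewrite expnSr !exprM IH -!(pFrobenius_autE hp) rmorphD.
Qed.

Lemma plin_add (R : comNzRingType) (p : nat) (q : {poly R}) :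
  p \in [pchar R] -> is_plinearized p q ->
  forall x y, q.[x + y] = q.[x] + q.[y].
Proof.
move=> hp hq x y; rewrite !horner_coef -big_split /=.
apply: eq_bigr => i _.
have [->|nz] := eqVneq q`_i 0; first by rewrite !mul0r addr0.
have [k ->] := hq _ nz.
by rewrite expDpk // mulrDr.
Qed.

Theorem lemma5p1 (p : nat) (F : fieldType) (E : fieldExtType F)
  (n : nat) (L P LP : {poly F}) (alpha : 'I_n -> E) :
  prime p -> p \in [pchar F] ->
  is_ppoly p n L ->
  separable_poly L ->
  splittingFieldFor 1%VS (map_poly (in_alg E) L) fullv ->
  L = 'X * (P \Po 'X^(p.-1)) ->
  is_min_plin_multiple p P LP ->
  (* alpha is an F_p-basis of the F_p-space V_L of roots of L in E *)
  (forall i, root (map_poly (in_alg E) L) (alpha i)) ->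
  (forall c : 'I_n -> nat, (forall i, (c i < p)%N) ->
     \sum_i (c i)%:R * alpha i = 0 -> forall i, c i = 0%N) ->
  (forall x : E, root (map_poly (in_alg E) L) x ->
     exists2 c : 'I_n -> nat, (forall i, (c i < p)%N) & x = \sum_i (c i)%:R * alpha i) ->
  forall k : 'I_n -> nat, (\sum_i k i)%N = p.-1 ->
    root (map_poly (in_alg E) LP) (\prod_i alpha i ^+ k i).
Proof.
move=> pp hpF [hLlin _] _ _ hL [hLPlin _ hdvd _] hroots _ _ k hk.
have pE : p \in [pchar E] by rewrite (pchar_lalg E).
set LE := map_poly (in_alg E) L.
set LPE := map_poly (in_alg E) LP.
have LEA := @plin_add _ _ _ pE (@plin_map _ E _ _ hLlin).
have LPEA := @plin_add _ _ _ pE (@plin_map _ E _ _ hLPlin).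
have hp1 : (0 < p.-1)%N by rewrite -ltnS prednK ?prime_gt1 // prime_gt0.
have hv : forall v, root LE v -> LPE.[v ^+ p.-1] = 0.
  move=> v; have [->|vnz] := eqVneq v 0.
    by rewrite expr0n eqn0Ngt hp1 /= (@addf0 _ (fun x => LPE.[x])).
  rewrite /root /LE hL rmorphM /= map_polyX map_comp_poly /= map_polyXn.
  rewrite hornerM hornerX horner_comp hornerXn mulf_eq0 (negbTE vnz) /= => /eqP hP.
  have [Q hQ] := dvdpP _ _ hdvd.
  by rewrite /LPE hQ rmorphM hornerM /= hP mulr0.
have hm : (p.-1 < p)%N by rewrite prednK ?prime_gt0.
have hc : forall c : 'I_n -> nat,
    LPE.[1 * (\sum_i (c i)%:R * alpha i) ^+ p.-1] = 0.
  move=> c; rewrite mul1r; apply: hv.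
  rewrite /root (@fsum _ (fun x => LE.[x]) LEA) big1 // => i _.
  by rewrite mulr_natl (@fMn _ (fun x => LE.[x]) LEA) (eqP (hroots i)) mul0rn.
have := @claim E p (fun x => LPE.[x]) pp pE LPEA n alpha 1 p.-1 hm hc k hk.
by rewrite mul1r /root => ->.
Qed.
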